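(* For every $k\ge0$, $F_k$ equals the $(I_0,I_0)$ entry of the matrix $\mathbf T^k$, where $I_0=[0,a-1]$.
   Context: Let $S$ be a finite set of integers with $a:=\max S\ge 1$ and $b:=-\min S\ge 1$. Each $s\in S$ carries a weight $\omega_s$ in a field $K$ of characteristic $0$; set $\omega_s:=0$ for $s\in\mathbb Z\setminus S$, and for $s\in\mathbb Z$ put $\beta_s:=\delta_{s,0}-\omega_s$. For $k\ge0$, $A_k$ is the $(k+1)\times(k+1)$ matrix with rows and columns indexed by $0,\dots,k$ whose $(i,j)$ entry is $\omega_{j-i}$. Put $F_0:=1$ and $F_k:=\det(1-A_{k-1})$ for $k\ge1$. Notation: $[m,n]:=\{i\in\mathbb Z: m\le i\le n\}$, $X+c:=\{x+c:x\in X\}$; an $n$-subset is a subset of cardinality $n$. For a finite set $I\subseteq\mathbb Z$ and $s\in\mathbb Z$, $\epsilon_s(I):=(-1)^{\#\{i\in I:\ i<s\}}$. $\mathbf T$ is the square matrix with rows and columns indexed by the $a$-subsets of $[-b,a-1]$ and entries $\mathbf T[I,J]:=\epsilon_s(I)\beta_s$ if there is an integer $s$ with $I\cup\{a\}=(J+1)\cup\{s\}$ (such $s$ is then unique), and $\mathbf T[I,J]:=0$ otherwise. *)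

(* Defs.v *)
From HB Require Import structures.
From mathcomp Require Import all_boot all_order all_algebra.
From Stdlib Require Import ClassicalEpsilon.
Set Implicit Arguments. Unset Strict Implicit. Unset Printing Implicit Defensive.
Import Order.TTheory GRing.Theory Num.Theory.
Local Open Scope ring_scope.

Section Defs.
Variable K : fieldType.
Variable S : seq int.
Variable w : int -> K.

Definition omega (s : int) : K := if s \in S then w s else 0.

Definition beta (s : int) : K := (s == 0)%:R - omega s.

Definition Amx (k : nat) : 'M[K]_k.+1 :=
  \matrix_(i < k.+1, j < k.+1) omega (j%:Z - i%:Z).

Definition Fk (k : nat) : K :=
  if k is k'.+1 then \det (1%:M - Amx k') else 1.

Variables a b : nat.
(* Subsets of [-b, a-1] are encoded as subsets of 'I_(b+a),
   the ordinal i standing for the integer i - b. *)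
Definition toZ (i : 'I_(b + a)) : int := i%:Z - b%:Z.

Definition inZ (I : {set 'I_(b + a)}) (x : int) : bool :=
  [exists i in I, toZ i == x].

Definition epsI (s : int) (I : {set 'I_(b + a)}) : K :=
  (-1) ^+ #|[set i in I | toZ i < s]|.

Definition Tcond (I J : {set 'I_(b + a)}) (s : int) : Prop :=
  forall x : int, (inZ I x || (x == a%:Z)) = (inZ J (x - 1) || (x == s)).

Definition Tentry (I J : {set 'I_(b + a)}) : K :=
  match excluded_middle_informative (exists s : int, Tcond I J s) with
  | left H => let s := proj1_sig (constructive_indefinite_description _ H) in
              epsI s I * beta s
  | right _ => 0
  end.

Definition asub := {I : {set 'I_(b + a)} | #|I| == a}.

Definition Tmx : 'M[K]_#|{: asub}| :=
  \matrix_(i, j) Tentry (val (enum_val i)) (val (enum_val j)).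

Definition I0set : {set 'I_(b + a)} := [set rshift b i | i : 'I_a].

Lemma I0set_card : #|I0set| == a.
Proof.
by rewrite /I0set card_imset ?cardsT ?card_ord //; apply: rshift_inj.
Qed.

Definition I0 : asub := exist _ I0set I0set_card.

End Defs.

(* Main.v *)
Require Import Defs.
From HB Require Import structures.
From mathcomp Require Import all_boot all_order all_algebra.
From mathcomp Require Import zify ring.
From Stdlib Require Import ClassicalEpsilon.
Set Implicit Arguments. Unset Strict Implicit. Unset Printing Implicit Defensive.
Import Order.TTheory GRing.Theory Num.Theory.
Local Open Scope ring_scope.

Section Part1.
Variable K : fieldType.
Variable S : seq int.
Variable w : int -> K.
Variables a b : nat.
Hypothesis hup : forall s, s \in S -> s <= a%:Z.
Hypothesis hlo : forall s, s \in S -> - b%:Z <= s.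
Hypothesis ha : (1 <= a)%N.

Definition D n (c : nat -> int) : K :=
  \det (\matrix_(r < n, j < n) beta S w (c j - (r : nat)%:Z)).
Definition condb n (c : nat -> int) :=
  [forall j : 'I_a, (n <= j)%N ==> (c j == (j : nat)%:Z)].
Definition E n c := if condb n c then D n c else 0.
Definition sh (c : nat -> int) m := fun l => c (bump m l) - 1.

Lemma beta_gt x : a%:Z < x -> beta S w x = 0.
Proof.
move=> hx; rewrite /beta /omega.
have -> : (x == 0) = false by apply/negbTE; rewrite gt_eqF // (lt_trans _ hx) // ltz_nat.
case: ifP => [/hup|]; last by rewrite subr0.
by move=> h; move: (lt_le_trans hx h); rewrite ltxx.
Qed.

Lemma beta_lt x : x < - b%:Z -> beta S w x = 0.
Proof.
move=> hx; rewrite /beta /omega.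
have -> : (x == 0) = false.
  apply/negbTE; rewrite lt_eqF // (lt_le_trans hx) // oppr_le0 //.
case: ifP => [/hlo|]; last by rewrite subr0.
by move=> h; move: (lt_le_trans hx h); rewrite ltxx.
Qed.

Lemma D_rec n c : D n.+1 c =
  \sum_(j < n.+1) (-1)^+j * beta S w (c j) * D n (sh c j).
Proof.
rewrite /D (expand_det_row _ ord0); apply: eq_bigr => j _.
rewrite mxE /cofactor /= add0n subr0 [_ * beta _ _ _]mulrC -mulrA; congr (_ * (_ * _)).
congr (\det _); apply/matrixP => r l; rewrite !mxE /sh /=.
congr (beta S w _); rewrite /bump /=; lia.
Qed.


Section Rec.
Variable c : nat -> int.
Hypothesis Hinc : forall j, c j < c j.+1.
Hypothesis Hge : forall j, (a <= j)%N -> c j = j%:Z.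

Lemma c_mono i k : (i <= k)%N -> c i <= c k.
Proof.
move=> /subnKC <-; elim: (k - i)%N => [|d IH]; first by rewrite addn0.
by rewrite addnS (le_trans IH) // ltW.
Qed.

Lemma c_add j d : c j + d%:Z <= c (j + d).
Proof.
elim: d => [|d IH]; first by rewrite addn0 addr0.
have := Hinc (j + d); rewrite addnS; lia.
Qed.

Lemma c_le j : c j <= j%:Z.
Proof.
case: (leqP a j) => [/Hge -> //|hj].
have := c_add j (a - j); rewrite subnKC ?(ltnW hj) // (Hge (leqnn a)).
have : (Posz (a - j)%N = Posz a - Posz j)%R by lia.
lia.
Qed.

Lemma E_rec n : E n.+1 c =
  \sum_(m < a.+1) (-1)^+m * beta S w (c m) * E n (sh c m).
Proof.
rewrite /E; case: (boolP (condb n.+1 c)) => Hc; last first.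
  move/forallPn: Hc => [j]; rewrite negb_imply => /andP[hj hcj].
  rewrite big1 // => m _.
  have -> : condb n (sh c m) = false.
    apply/negbTE/forallPn.
    have hj1 : (j.-1 < a)%N by have := ltn_ord j; lia.
    exists (Ordinal hj1); rewrite negb_imply /= (_ : (n <= j.-1)%N) /=; last by lia.
    have h1 := c_le j; have h2 := Hinc j.-1; rewrite prednK in h2; last by lia.
    have h3 : c j != j%:Z by [].
    rewrite /sh; apply/eqP; rewrite /bump; case: leqP => _.
      rewrite add1n prednK; last by lia.
      lia.
    rewrite add0n; lia.
  by rewrite mulr0.
have Hc' i : (n.+1 <= i)%N -> c i = i%:Z.
  move=> hi; case: (ltnP i a) => hia; last exact: Hge.
  by move/forallP: Hc => /(_ (Ordinal hia)) /implyP /(_ hi) /eqP.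
rewrite D_rec.
rewrite (big_ord_widen (maxn n a).+1 (fun j => (-1)^+j * beta S w (c j) * D n (sh c j))); last by lia.
rewrite [RHS](big_ord_widen (maxn n a).+1 (fun j => (-1)^+j * beta S w (c j) * (if condb n (sh c j) then D n (sh c j) else 0))); last by lia.
rewrite big_mkcond [RHS]big_mkcond /=; apply: eq_bigr => -[j hj] _ /=.
case: (leqP j n) => hjn; case: (leqP j a) => hja /=.
- have -> : condb n (sh c j).
    apply/forallP => l; apply/implyP => hl; rewrite /sh /bump.
    have -> : (j <= l)%N by lia.
    rewrite add1n Hc' //; last by lia.
    all: try (apply/eqP; lia).
  rewrite ifT // ifT //; lia.
- rewrite ifT; last by lia.
  rewrite ifF; last by lia.
  rewrite (@Hge j); last by lia.
  rewrite beta_gt ?mulr0 ?mul0r //; lia.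
- have -> : condb n (sh c j) = false.
    apply/negbTE/forallPn.
    have hn : (n < a)%N by lia.
    exists (Ordinal hn); rewrite negb_imply /= leqnn /= /sh /bump (_ : (j <= n)%N = false); last by lia.
    have := Hinc n; rewrite (Hc' n.+1) // add0n; lia.
  rewrite ifF ?ifT ?mulr0 //; lia.
Qed.

End Rec.

Lemma E_low n c : c 0%N < - b%:Z -> E n c = 0.
Proof.
move=> h0; rewrite /E; case: ifP => // Hc.
case: n Hc => [|n] Hc.
  move/forallP: Hc => /(_ (Ordinal ha)) /=; move/eqP => e; move: h0; rewrite e; lia.
rewrite /D (expand_det_col _ ord0) big1 // => r _.
by rewrite mxE beta_lt ?mul0r //= ; lia.
Qed.

Lemma E_ext n c c' : c =1 c' -> E n c = E n c'.
Proof.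
move=> e; rewrite /E /condb /D.
rewrite (eq_forallb (_ : _ =1 fun j : 'I_a => (n <= j)%N ==> (c' j == j%:Z))); last by move=> j; rewrite e.
by congr (if _ then \det _ else _); apply/matrixP => i j; rewrite !mxE e.
Qed.

Lemma card_count (T : finType) (A : {set T}) (P : pred T) :
  #|[set x in A | P x]| = count P (enum A).
Proof.
rewrite cardE /enum_mem -size_filter -filter_predI; congr size; apply: eq_filter => x.
by rewrite /= !inE andbC.
Qed.

Definition sq (I : {set 'I_(b + a)}) : seq int := [seq toZ i | i <- enum I].
Definition cf (I : {set 'I_(b + a)}) (j : nat) : int := nth j%:Z (sq I) j.

Lemma toZ_inj : injective (@toZ a b).
Proof. move=> i j; rewrite /toZ => h; apply: ord_inj; lia. Qed.

Lemma toZ_range (i : 'I_(b + a)) : - b%:Z <= toZ i < a%:Z.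
Proof. rewrite /toZ; have := ltn_ord i; lia. Qed.

Lemma toZ_surj x : - b%:Z <= x < a%:Z -> exists i : 'I_(b + a), toZ i = x.
Proof.
move=> /andP[h1 h2].
have [n hn] : exists n : nat, x + b%:Z = n%:Z.
  by exists (absz (x + b%:Z)); rewrite abszE ger0_norm //; lia.
have hx : (n < b + a)%N by lia.
exists (Ordinal hx); rewrite /toZ /=; lia.
Qed.

Lemma sq_sorted I : sorted <%R (sq I).
Proof.
have inc_A : sorted ltn (map val (enum I)).
  rewrite -[enum _](eq_filter (mem_enum _)).
  rewrite -(eq_filter (mem_map val_inj _)) -filter_map.
  by rewrite (sorted_filter ltn_trans) // unlock val_ord_enum iota_ltn_sorted.
have -> : sq I = map (fun n : nat => n%:Z - b%:Z) (map val (enum I)) by rewrite -map_comp.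
rewrite sorted_map; apply: sub_sorted inc_A => x y /= h; lia.
Qed.

Lemma mem_sq I x : (x \in sq I) = inZ I x.
Proof.
apply/mapP/existsP => [[i hi ->]|[i /andP[hi /eqP <-]]]; exists i => //.
  by rewrite -mem_enum hi eqxx.
by rewrite mem_enum.
Qed.

Lemma size_sq I : size (sq I) = #|I|.
Proof. by rewrite size_map cardE. Qed.

Lemma sq_range I x : x \in sq I -> - b%:Z <= x < a%:Z.
Proof. by move/mapP=> [i _ ->]; apply: toZ_range. Qed.

Lemma sq_inj I L : sq I = sq L -> I = L.
Proof.
move=> e; apply/setP => i.
by rewrite -mem_enum -(mem_map toZ_inj) -/(sq I) e /sq (mem_map toZ_inj) mem_enum.
Qed.

Section CF.
Variable I : {set 'I_(b + a)}.
Hypothesis hI : #|I| = a.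

Lemma size_sqI : size (sq I) = a.
Proof. by rewrite size_sq hI. Qed.

Lemma cf_ge j : (a <= j)%N -> cf I j = j%:Z.
Proof. by move=> h; rewrite /cf nth_default // size_sqI. Qed.

Lemma cf_mem j : (j < a)%N -> cf I j \in sq I.
Proof. by move=> h; rewrite /cf mem_nth // size_sqI. Qed.

Lemma cf_inc j : cf I j < cf I j.+1.
Proof.
case: (ltnP j.+1 a) => h.
  have h1 : (j < size (sq I))%N by rewrite size_sqI; lia.
  have h2 : (j.+1 < size (sq I))%N by rewrite size_sqI; lia.
  rewrite /cf (set_nth_default 0 _ h1) (set_nth_default 0 _ h2).
  by apply: (sorted_ltn_nth lt_trans) => //; apply: sq_sorted.
case: (ltnP j a) => h2.
  have := sq_range (cf_mem h2); rewrite (@cf_ge j.+1 h) //; lia.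
by rewrite !cf_ge //; lia.
Qed.

Lemma cf_lt i k : (i < k)%N -> cf I i < cf I k.
Proof.
move=> h; have := c_add cf_inc i.+1 (k - i.+1); rewrite subnKC //.
have := cf_inc i; lia.
Qed.

Lemma cf_inj : injective (cf I).
Proof.
move=> i k e; case: (ltngtP i k) => // h; have := cf_lt h; rewrite e ltxx //.
Qed.

Lemma cf_lo j : - b%:Z <= cf I j.
Proof.
case: (ltnP j a) => h; first by have /andP[] := sq_range (cf_mem h).
rewrite cf_ge //; lia.
Qed.

Lemma sq_mk : sq I = mkseq (cf I) a.
Proof.
apply: (@eq_from_nth _ 0); first by rewrite size_mkseq size_sqI.
move=> j; rewrite size_sqI => hj; rewrite nth_mkseq // /cf (set_nth_default 0) // size_sqI //.
Qed.

Lemma memIa x : (x \in sq I) || (x == a%:Z) = [exists j : 'I_a.+1, cf I j == x].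
Proof.
apply/idP/existsP => [/orP[|/eqP ->]|[j /eqP <-]].
- rewrite sq_mk => /mapP[j]; rewrite mem_iota add0n => hj ->.
  by exists (Ordinal (ltnW hj : (j < a.+1)%N)).
- by exists ord_max; rewrite cf_ge.
- case: (ltnP j a) => h; first by rewrite cf_mem.
  by rewrite cf_ge // (_ : (j : nat) = a) ?eqxx ?orbT //; have := ltn_ord j; lia.
Qed.

Lemma memI x : (x \in sq I) = [exists j : 'I_a, cf I j == x].
Proof.
apply/idP/existsP => [|[j /eqP <-]]; last exact: cf_mem.
rewrite sq_mk => /mapP[j]; rewrite mem_iota add0n => hj ->.
by exists (Ordinal hj).
Qed.

End CF.

Lemma mem_mkseqE (f : nat -> int) n y :
  (y \in mkseq f n) = [exists j : 'I_n, f j == y].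
Proof.
apply/mapP/existsP => [[j]|[j /eqP <-]].
  by rewrite mem_iota add0n => hj ->; exists (Ordinal hj).
by exists (j : nat); rewrite // mem_iota add0n ltn_ord.
Qed.

Lemma bump_lt m i k : (i < k)%N -> (bump m i < bump m k)%N.
Proof. move=> h; rewrite /bump; case: (leqP m i); case: (leqP m k); lia. Qed.

Lemma bump_le m l : (bump m l <= l.+1)%N.
Proof. rewrite /bump; case: leqP; lia. Qed.

Lemma unbump_lt m j : (m <= a)%N -> (j <= a)%N -> j != m -> (unbump m j < a)%N.
Proof. move=> h0 h1 /eqP h2; rewrite /unbump; case: (ltnP m j) => /= h3; lia. Qed.

Section KEY.
Variables I L : {set 'I_(b + a)}.
Hypothesis hI : #|I| = a.
Hypothesis hL : #|L| = a.
Variable m : nat.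
Hypothesis hm : (m <= a)%N.

Definition Qs := mkseq (fun l => cf I (bump m l) - 1) a.

Lemma Qs_sorted : sorted <%R Qs.
Proof.
rewrite /Qs /mkseq sorted_map; apply: (sub_sorted _ (iota_ltn_sorted 0 a)) => i k /= hik.
have := cf_lt hI (bump_lt m hik); lia.
Qed.

Lemma Tcond_of : (forall l, (l < a)%N -> cf L l = cf I (bump m l) - 1) ->
  Tcond I L (cf I m).
Proof.
move=> hQ x; rewrite -!mem_sq (memIa hI) (memI hL).
apply/idP/idP.
  move/existsP=> [j /eqP hj]; case: (eqVneq (j : nat) m) => [ejm|njm].
    by rewrite -hj ejm eqxx orbT.
  have hu := unbump_lt hm (ltn_ord j : (j < a.+1)%N) njm.
  apply/orP; left; apply/existsP; exists (Ordinal hu); rewrite /= hQ //.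
  by rewrite unbumpK ?inE // hj.
case/orP => [/existsP[l /eqP hl]|/eqP ->].
  have hb : (bump m l < a.+1)%N by have := bump_le m l; have := ltn_ord l; lia.
  apply/existsP; exists (Ordinal hb); apply/eqP => /=.
  have := hQ l (ltn_ord l); lia.
have hb : (m < a.+1)%N by lia.
by apply/existsP; exists (Ordinal hb).
Qed.

Lemma of_Tcond : Tcond I L (cf I m) ->
  (forall l, (l < a)%N -> cf L l = cf I (bump m l) - 1).
Proof.
move=> hT.
set s := cf I m.
have nots : (s - 1) \notin sq L.
  pose P := map (fun z => z + 1) (sq L) ++ [:: s].
  pose U := mkseq (cf I) a.+1.
  have hU : uniq U := mkseq_uniq _ (cf_inj hI).
  have memP y : (y \in map (fun z => z + 1) (sq L)) = (y - 1 \in sq L).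
    apply/mapP/idP => [[z hz ->]|hy]; first by rewrite addrK.
    by exists (y - 1) => //; rewrite subrK.
  have hUP : U =i P.
    move=> y; rewrite mem_cat mem_seq1 memP mem_mkseqE -(memIa hI).
    by have := hT y; rewrite -!mem_sq.
  have := uniq_size_uniq hU hUP.
  rewrite size_cat size_map size_sqI // size_mkseq addn1 eqxx.
  rewrite cat_uniq /= orbF andbT => /andP[_].
  by rewrite memP.
have hsL : sq L = Qs.
  apply: (irr_sorted_eq lt_trans ltxx (sq_sorted L) Qs_sorted) => x.
  have := hT (x + 1); rewrite -!mem_sq addrK => hx.
  rewrite /Qs mem_mkseqE; apply/idP/idP => [hxL|].
    move: hx; rewrite hxL /= (memIa hI) => /existsP[j /eqP hj].
    have njm : (j : nat) != m.
      apply/eqP => ejm; move: nots; rewrite /s -ejm hj addrK hxL //.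
    have hu := unbump_lt hm (ltn_ord j : (j < a.+1)%N) njm.
    apply/existsP; exists (Ordinal hu); rewrite /= unbumpK ?inE // hj addrK //.
  move/existsP=> [l /eqP hl].
  have hb : (bump m l < a.+1)%N by have := bump_le m l; have := ltn_ord l; lia.
  have : (x + 1 \in sq I) || (x + 1 == a%:Z).
    rewrite (memIa hI); apply/existsP; exists (Ordinal hb); apply/eqP => /=; lia.
  rewrite hx => /orP[//|/eqP e].
  have : bump m l = m by apply: (cf_inj hI); rewrite -/s; lia.
  by move/eqP; rewrite eq_sym (negbTE (neq_bump _ _)).
move=> l hl; rewrite /cf hsL /Qs nth_mkseq //.
Qed.

End KEY.

Lemma Tcond_range (I L : {set 'I_(b + a)}) s : #|I| = a -> Tcond I L s ->
  exists m : 'I_a.+1, s = cf I m.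
Proof.
move=> hI hT; have := hT s; rewrite eqxx orbT -mem_sq (memIa hI).
by move/existsP=> [m /eqP <-]; exists m.
Qed.

Lemma Tcond_uniq (I L : {set 'I_(b + a)}) m1 m2 : #|I| = a -> #|L| = a -> (m1 <= a)%N -> (m2 <= a)%N ->
  Tcond I L (cf I m1) -> Tcond I L (cf I m2) -> m1 = m2.
Proof.
move=> hI hL h1 h2 t1 t2.
have e l : (l < a)%N -> bump m1 l = bump m2 l.
  move=> hl; apply: (cf_inj hI).
  have := of_Tcond hI hL h1 t1 hl; have := of_Tcond hI hL h2 t2 hl; lia.
case: (ltngtP m1 m2) => // h.
  by have := e m1 (leq_trans h h2); rewrite /bump leqnn; case: (leqP m2 m1); lia.
by have := e m2 (leq_trans h h1); rewrite /bump leqnn; case: (leqP m1 m2); lia.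
Qed.

Lemma epsI_cf (I : {set 'I_(b + a)}) m : #|I| = a -> (m <= a)%N -> epsI K (cf I m) I = (-1) ^+ m.
Proof.
move=> hI hm; rewrite /epsI card_count.
rewrite (_ : count _ _ = count (fun x => x < cf I m) (sq I)); last by rewrite count_map.
rewrite (sq_mk hI) /mkseq count_map.
have -> : iota 0 a = iota 0 m ++ iota m (a - m) by rewrite -iotaD subnKC.
rewrite count_cat (eq_in_count (a2 := predT) (s := iota 0 m)); last first.
  by move=> j; rewrite mem_iota add0n => hj /=; apply: (cf_lt hI hj).
rewrite (eq_in_count (a2 := pred0) (s := iota m _)); last first.
  move=> j; rewrite mem_iota => /andP[hj _] /=.
  case: (eqVneq m j) => [<-|hne]; first by rewrite ltxx.
  have hmj : (m < j)%N by lia.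
  by have := cf_lt hI hmj; apply: contraTF => h; rewrite lt_gtF.
by rewrite count_predT count_pred0 size_iota addn0.
Qed.

Lemma Tentry_val (I L : {set 'I_(b + a)}) m : #|I| = a -> #|L| = a -> (m <= a)%N ->
  Tcond I L (cf I m) -> Tentry S w I L = (-1) ^+ m * beta S w (cf I m).
Proof.
move=> hI hL hm hT; rewrite /Tentry.
case: excluded_middle_informative => [H|H]; last by exfalso; apply: H; exists (cf I m).
case: (constructive_indefinite_description _ H) => s' hs' /=.
have [m' e] := Tcond_range hI hs'; rewrite e in hs' *.
have hm' : (m' <= a)%N by have := ltn_ord m'; lia.
rewrite (Tcond_uniq hI hL hm' hm hs' hT) epsI_cf //.
Qed.

Lemma Tentry_zero (I L : {set 'I_(b + a)}) : #|I| = a ->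
  (forall m : 'I_a.+1, ~ Tcond I L (cf I m)) -> Tentry S w I L = 0.
Proof.
move=> hI hn; rewrite /Tentry.
case: excluded_middle_informative => // [[s hs]].
by have [m e] := Tcond_range hI hs; exfalso; apply: (hn m); rewrite -e.
Qed.

Definition tb (I L : {set 'I_(b + a)}) m :=
  [forall l : 'I_a, cf L l == cf I (bump m l) - 1].

Lemma tbP (I L : {set 'I_(b + a)}) m : #|I| = a -> #|L| = a -> (m <= a)%N ->
  Tcond I L (cf I m) <-> tb I L m.
Proof.
move=> hI hL hm; split => [hT|/forallP ht].
  by apply/forallP => l; apply/eqP; apply: (of_Tcond hI hL hm hT).
apply: (Tcond_of hI hL hm) => l hl; exact/eqP/(ht (Ordinal hl)).
Qed.

Lemma cf_eq_set (L L' : {set 'I_(b + a)}) : #|L| = a -> #|L'| = a ->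
  (forall l, (l < a)%N -> cf L l = cf L' l) -> L = L'.
Proof.
move=> hL hL' e; apply: sq_inj; rewrite (sq_mk hL) (sq_mk hL') /mkseq.
by apply/eq_in_map => l; rewrite mem_iota add0n; apply: e.
Qed.

Lemma Qs_range (I : {set 'I_(b + a)}) m x : #|I| = a -> (m <= a)%N ->
  (m == 0)%N || (- b%:Z < cf I 0) -> x \in Qs I m -> - b%:Z <= x < a%:Z.
Proof.
move=> hI hm hv; rewrite /Qs mem_mkseqE => /existsP[l /eqP <-].
have hb : (bump m l <= a)%N by have := bump_le m l; have := ltn_ord l; lia.
have up : cf I (bump m l) <= a%:Z.
  case: (ltngtP (bump m l) a) => h; last by rewrite cf_ge // h.
  - by have := cf_lt hI h; rewrite (cf_ge hI (leqnn a)) => /ltW.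
  - lia.
have lo : - b%:Z < cf I (bump m l).
  case: (posnP (bump m l)) => h.
    rewrite h; have hm0 : (m == 0)%N = false by move: h; rewrite /bump; case: (leqP m l) => /=; lia.
    by move: hv; rewrite hm0.
  have := cf_lt hI h; have := cf_lo hI 0; lia.
lia.
Qed.

Lemma exists_L (I : {set 'I_(b + a)}) m : #|I| = a -> (m <= a)%N ->
  (m == 0)%N || (- b%:Z < cf I 0) -> exists L : asub a b, tb I (val L) m.
Proof.
move=> hI hm hv.
pose Ls := [set i : 'I_(b + a) | toZ i \in Qs I m].
have hsq : sq Ls = Qs I m.
  apply: (irr_sorted_eq lt_trans ltxx (sq_sorted Ls) (Qs_sorted hI hI hm)) => x.
  rewrite mem_sq; apply/existsP/idP => [[i /andP[]]|hx].
    by rewrite inE => hi /eqP <-.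
  have [i hi] := toZ_surj (Qs_range hI hm hv hx).
  by exists i; rewrite inE hi hx eqxx.
have hc : #|Ls| == a by rewrite -size_sq hsq size_mkseq.
exists (exist _ Ls hc); apply/forallP => l /=.
by rewrite /cf hsq /Qs nth_mkseq.
Qed.

Lemma cardA (I : asub a b) : #|val I| = a.
Proof. exact: eqP (valP I). Qed.

Lemma bridge (I : asub a b) n :
  \sum_(L : asub a b) Tentry S w (val I) (val L) * E n (cf (val L)) =
  \sum_(m < a.+1) (-1) ^+ m * beta S w (cf (val I) m) * E n (sh (cf (val I)) m).
Proof.
have hI := cardA I.
pose X (m : 'I_a.+1) := (-1) ^+ m * beta S w (cf (val I) m) * E n (sh (cf (val I)) m).
transitivity (\sum_(L : asub a b) \sum_(m < a.+1) (if tb (val I) (val L) m then X m else 0)).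
  apply: eq_bigr => L _; have hL := cardA L.
  case: (boolP [exists m : 'I_a.+1, tb (val I) (val L) m]) => [/existsP[m0 hm0]|hn].
    have hm0a : (m0 <= a)%N by have := ltn_ord m0; lia.
    rewrite (bigD1 m0) //= hm0 big1 ?addr0; last first.
      move=> m hne; case: ifP => // hm; exfalso; move/eqP: hne; apply; apply: val_inj => /=.
      have hma : (m <= a)%N by have := ltn_ord m; lia.
      apply: (Tcond_uniq hI hL hma hm0a); by apply/(tbP hI hL).
    rewrite (Tentry_val hI hL hm0a); last by apply/(tbP hI hL).
    rewrite /X; congr (_ * _); apply: E_ext => l.
    case: (ltnP l a) => hl; first by move/forallP: hm0 => /(_ (Ordinal hl)) /eqP.
    rewrite /sh (cf_ge hL hl) /bump (_ : (m0 <= l)%N) //= ?add1n; last by lia.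
    rewrite -[sval I]/(val I) (cf_ge hI); lia.
  rewrite Tentry_zero ?mul0r; last first.
    move=> m hT; move/existsP: hn; apply; exists m.
    have hma : (m <= a)%N by have := ltn_ord m; lia.
    by apply/(tbP hI hL).
    by [].
  by symmetry; apply: big1 => m _; case: ifP => // hm; move/existsP: hn; case; exists m.
rewrite exchange_big; apply: eq_bigr => m _.
have hma : (m <= a)%N by have := ltn_ord m; lia.
case: (boolP ((m == 0 :> nat)%N || (- b%:Z < cf (val I) 0))) => hv.
  have [Lm hLm] := exists_L hI hma hv.
  rewrite -big_mkcond (big_pred1 Lm) // => L /=.
  apply/idP/eqP => [hL|->//]; apply: val_inj; apply: (cf_eq_set (cardA L) (cardA Lm)) => l hl.
  by move/forallP: hL => /(_ (Ordinal hl)) /eqP ->; move/forallP: hLm => /(_ (Ordinal hl)) /eqP ->.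
have hX : X m = 0.
  rewrite /X E_low ?mulr0 // /sh.
  move: hv; rewrite negb_or => /andP[hm0 hb].
  rewrite /bump (_ : (m <= 0)%N = false) /=; last by lia.
  rewrite add0n -[sval I]/(val I); move: hb; rewrite -leNgt; have := cf_lo hI 0; lia.
rewrite -[RHS]/(X m) hX.
by apply: big1 => L _; case: ifP.
Qed.

Lemma sqI0 : sq (I0set a b) = mkseq (fun j => j%:Z) a.
Proof.
apply: (irr_sorted_eq lt_trans ltxx (sq_sorted _)).
  rewrite /mkseq sorted_map; apply: (sub_sorted _ (iota_ltn_sorted 0 a)) => i k /= h.
  by rewrite ltz_nat.
move=> x; rewrite mem_sq mem_mkseqE; apply/existsP/existsP => [[i /andP[]]|[j /eqP <-]].
  rewrite /I0set => /imsetP[j _ ->] /eqP <-; exists j; rewrite /toZ /=; apply/eqP; lia.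
exists (rshift b j); rewrite /I0set (imset_f (fun i => rshift b i)) //=.
rewrite /toZ /=; apply/eqP; lia.
Qed.

Lemma cfI0 j : cf (I0set a b) j = j%:Z.
Proof.
rewrite /cf sqI0; case: (ltnP j a) => h; first by rewrite nth_mkseq.
by rewrite nth_default // size_mkseq.
Qed.

Lemma main_ind n (L : asub a b) :
  (Tmx S w a b ^+ n) (enum_rank L) (enum_rank (I0 a b)) = E n (cf (val L)).
Proof.
elim: n L => [|n IH] L.
  rewrite expr0 mxE /E (inj_eq enum_rank_inj).
  case: (eqVneq L (I0 a b)) => [->|hne].
    rewrite ifT ?eqxx // /D ?det_mx00 // /condb; apply/forallP => j; apply/implyP => _ /=; by rewrite cfI0.
  rewrite ifF //; apply/negbTE; apply: contra hne => /forallP hc; apply/eqP.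
  apply: val_inj; apply: (cf_eq_set (cardA L) (cardA (I0 a b))) => l hl /=.
  by rewrite cfI0; move: (hc (Ordinal hl)) => /= /eqP.
rewrite exprS -mulmxE mxE.
transitivity (\sum_(L' : asub a b) Tentry S w (val L) (val L') * E n (cf (val L'))).
  rewrite (reindex (@enum_rank _)) /=; last by apply: onW_bij; apply: enum_rank_bij.
  by apply: eq_bigr => L' _; rewrite IH mxE !enum_rankK.
by rewrite bridge E_rec //; [apply: cf_inc (cardA L) | apply: cf_ge (cardA L)].
Qed.

Lemma final k :
  Fk S w k = (Tmx S w a b ^+ k) (enum_rank (I0 a b)) (enum_rank (I0 a b)).
Proof.
rewrite main_ind (E_ext k (c' := fun j => j%:Z)); last exact: cfI0.
rewrite /E ifT; last by rewrite /condb; apply/forallP => j; apply/implyP.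
case: k => [|k]; first by rewrite /D det_mx00.
rewrite /Fk /D; congr (\det _); apply/matrixP => i j; rewrite !mxE /beta.
congr (_ - _); rewrite subr_eq0 eqz_nat eq_sym //.
Qed.

End Part1.

Theorem mainTheorem4 (K : fieldType) (S : seq int) (w : int -> K) (a b : nat) :
  [pchar K] =i pred0 ->
  (a%:Z \in S) -> (forall s, s \in S -> s <= a%:Z) ->
  ((- b%:Z) \in S) -> (forall s, s \in S -> - b%:Z <= s) ->
  (1 <= a)%N -> (1 <= b)%N ->
  forall k : nat,
    Fk S w k = (Tmx S w a b ^+ k) (enum_rank (I0 a b)) (enum_rank (I0 a b)).
Proof.
move=> _ _ hup _ hlo ha _ k.
exact: (@final K S w a b hup hlo ha k).
Qed.
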